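(* Let $n\ge2$ be an integer and $\lambda\in(2n-1,2n)$. Let $\phi:[0,1]\to[0,1]$ be non-increasing with $\phi(0)=1$, continuous on $[0,1]$, differentiable on $(0,1)$, non-vanishing on $(0,1)$, and such that $\phi'/\phi$ is non-increasing on $(0,1)$. Then the function $p_0:[0,n-1]\to\mathbb{R}$, \[ p_0(l)=\frac{\phi\left(\frac{2l+1}{\lambda}\right)}{\phi\left(\frac{2l}{\lambda}\right)}, \] is non-increasing.
   Context: ''Decreasing'' in the paper is used in the wide sense (non-increasing). *)

(* Defs.v *)
From HB Require Import structures.
From mathcomp Require Import all_boot all_order all_algebra.
From mathcomp Require Import all_classical all_reals all_analysis.
Set Implicit Arguments. Unset Strict Implicit. Unset Printing Implicit Defensive.
Import Order.TTheory GRing.Theory Num.Theory.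
Import numFieldNormedType.Exports.
Local Open Scope ring_scope.
Local Open Scope classical_set_scope.

Definition p0 (R : realType) (phi : R -> R) (lambda l : R) : R :=
  phi ((2 * l + 1) / lambda) / phi ((2 * l) / lambda).

(* Main.v *)
Require Import Defs.
From HB Require Import structures.
From mathcomp Require Import all_boot all_order all_algebra.
From mathcomp Require Import all_classical all_reals all_analysis.
From mathcomp Require Import ring lra.
Import Order.TTheory GRing.Theory Num.Theory.
Import numFieldNormedType.Exports.
Local Open Scope ring_scope.
Local Open Scope classical_set_scope.

Theorem mainTheorem13 (R : realType) (n : nat) (lambda : R) (phi : R -> R)
  (hn : (2 <= n)%N)
  (hlam : 2 * n%:R - 1 < lambda /\ lambda < 2 * n%:R)
  (hrange : forall x : R, 0 <= x <= 1 -> 0 <= phi x <= 1)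
  (hnoninc : forall x y : R, 0 <= x -> x <= y -> y <= 1 -> phi y <= phi x)
  (h0 : phi 0 = 1)
  (hcont : {within `[0, 1], continuous phi})
  (hder : forall x : R, 0 < x < 1 -> derivable phi x 1)
  (hnz : forall x : R, 0 < x < 1 -> phi x != 0)
  (hlog : forall x y : R, 0 < x -> x <= y -> y < 1 ->
            (derive1 phi y) / phi y <= (derive1 phi x) / phi x) :
  forall l1 l2 : R, 0 <= l1 -> l1 <= l2 -> l2 <= n%:R - 1 ->
    p0 phi lambda l2 <= p0 phi lambda l1.
Proof.
move=> l1 l2 l10 l12 l2n.
case: hlam => hl1 hl2.
have n2 : (2 : R) <= n%:R by rewrite (ler_nat R 2 n).
have lam0 : 0 < lambda by lra.
set h := lambda^-1.
have h0' : 0 < h by rewrite invr_gt0.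
have phipos : forall x, 0 <= x -> x < 1 -> 0 < phi x.
  move=> x x0 x1; case: (ltgtP x 0) x0 => // [x0 _|-> _]; last by rewrite h0.
  have /andP[p0 _] := hrange x ltac:(apply/andP; split; lra).
  by rewrite lt_def p0 hnz ?x0.
set F := fun x => phi (x + h) / phi x.
have pF : forall l, p0 phi lambda l = F (2 * l / lambda).
  by move=> l; rewrite /p0 /F mulrDl mul1r.
rewrite !pF.
set x1 := 2 * l1 / lambda; set x2 := 2 * l2 / lambda.
have x10 : 0 <= x1 by rewrite /x1 divr_ge0 //; lra.
have x12 : x1 <= x2 by rewrite /x1 /x2 ler_pM2r ?invr_gt0 //; lra.
have x2h : x2 + h < 1.
  rewrite /x2 /h -[X in _ + X]mul1r -mulrDl ltr_pdivrMr // mul1r; lra.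
have dG : forall x, 0 < x + h < 1 -> derivable (phi \o shift h) x 1.
  move=> x xh; apply/derivable1_diffP.
  apply: (@differentiable_comp _ _ _ _ (shift h) phi).
    apply/derivable1_diffP; exact: (@ex_derive _ _ _ _ _ _ _ (is_derive_shift x 1 h)).
  apply/derivable1_diffP; apply: hder; exact: xh.
have Fder : forall x, 0 < x -> x + h < 1 -> derivable F x 1 /\ F^`() x <= 0.
  move=> x x0 xh1.
  have xl1 : x < 1 by lra.
  have dx : derivable phi x 1 by apply: hder; apply/andP; split.
  have dxh : derivable phi (x + h) 1 by apply: hder; apply/andP; split => //; lra.
  have dGx : derivable (phi \o shift h) x 1 by apply: dG; apply/andP; split => //; lra.
  have dG' : (phi \o shift h)^`() x = phi^`() (x + h).
    have ds : derivable (shift h) x 1 := @ex_derive _ _ _ _ _ _ _ (is_derive_shift x 1 h).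
    rewrite (derive1_comp ds dxh).
    have -> : (shift h)^`() x = 1 by rewrite derive1E; exact: (@derive_val _ _ _ _ _ _ _ (is_derive_shift x 1 h)).
    by rewrite mulr1.
  have nx : phi x != 0 by apply: hnz; apply/andP; split.
  have dV : derivable (fun y => (phi y)^-1) x 1 by apply: derivableV.
  have -> : F = (phi \o shift h) * (fun y => (phi y)^-1) by apply/funext.
  split; first exact: derivableM.
  rewrite derive1E deriveM // deriveV // -!derive1E dG' /=.
  rewrite -![_ *: _]/(_ * _).
  have a0 : 0 < phi (x + h) by apply: phipos; lra.
  have b0 : 0 < phi x by apply: phipos; lra.
  have hl := hlog x (x + h) x0 ltac:(lra) xh1.
  set a := phi (x + h) in a0 hl *; set b := phi x in b0 hl nx *.
  set d1 := phi^`() x in hl *; set d2 := phi^`() (x + h) in hl *.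
  have -> : a * (- b ^- 2 * d1) + b^-1 * d2 = a / b * (d2 / a - d1 / b).
    by field; apply/andP; split; rewrite gt_eqF.
  by rewrite pmulr_rle0 ?divr_gt0 // subr_le0.
have Fcont : forall x, 0 < x -> x + h < 1 -> F @ x --> F x.
  move=> x x0 xh; apply/differentiable_continuous/derivable1_diffP.
  exact: (Fder x x0 xh).1.
case: (eqVneq x1 x2) => [->|x12n]; first by [].
have x12s : x1 < x2 by rewrite lt_def eq_sym x12n x12.
have x20 : 0 < x2 by lra.
apply: (ler0_derive1_le_cc (f:=F) (a:=x1) (b:=x2)); last first.
- exact: x12.
- by rewrite in_itv /= lexx x12.
- by rewrite in_itv /= lexx x12.
- apply/continuous_within_itvP => //; split.
  + move=> x; rewrite in_itv /= => /andP[a b].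
    apply: Fcont; lra.
  + case: (ltgtP x1 0) x10 => // [x1p _|x1z _].
      by apply: cvg_at_right_filter; apply: Fcont; lra.
    rewrite x1z.
    have [_ c1 _] := (continuous_within_itvP phi (@ltr01 R)).1 hcont.
    have c2 : (phi \o shift h) @ 0^'+ --> (phi \o shift h) 0.
      apply: cvg_at_right_filter; apply/differentiable_continuous/derivable1_diffP.
      by apply: dG; rewrite add0r h0' /=; lra.
    have p00 : phi 0 != 0 by rewrite h0 oner_neq0.
    exact: (cvgM c2 (cvgV p00 c1)).
  + by apply: cvg_at_left_filter; apply: Fcont; lra.
- move=> x; rewrite in_itv /= => /andP[a b].
  apply: (Fder x _ _).2; lra.
- move=> x; rewrite in_itv /= => /andP[a b].
  apply: (Fder x _ _).1; lra.
Qed.
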